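(* Let $0<q<1/2$, $p=1-q$, $s=4pq$, and let $I_x(a,b)=\frac{\Gamma(a+b)}{\Gamma(a)\Gamma(b)}\int_0^xt^{a-1}(1-t)^{b-1}\,dt$. For every real $z>1$, $$\sqrt{\frac{z}{z+\frac12}}\cdot\frac{s^z}{\sqrt{\pi z}}\le I_s(z,1/2)\le\frac{1}{\sqrt{1-s}}\cdot\frac{s^z}{\sqrt{\pi z}}.$$
   Context: For integers $z\ge1$, $I_s(z,1/2)$ equals the probability $P(z)=1-\sum_{k=0}^{z-1}(p^zq^k-q^zp^k)\binom{k+z-1}{k}$ of success of a double-spend attack after $z$ confirmations. *)

(* Defs.v *)
From Stdlib Require Import Reals.
From Coquelicot Require Import Coquelicot.
Open Scope R_scope.

Definition Gamma (a : R) : R :=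
  RInt_gen (fun t => Rpower t (a - 1) * exp (- t))
           (at_right 0) (Rbar_locally p_infty).

(* Used here only with a = z > 1, b = 1/2 and 0 < x < 1, where the integrand
   is continuous on (0, x] and the integral is an ordinary Riemann integral. *)
Definition inc_beta (x a b : R) : R :=
  Gamma (a + b) / (Gamma a * Gamma b) *
  RInt (fun t => Rpower t (a - 1) * Rpower (1 - t) (b - 1)) 0 x.

(* Main.v *)
Require Import Defs.
From Stdlib Require Import Reals Lra Lia Classical.
From Coquelicot Require Import Coquelicot.
Open Scope R_scope.

Definition IG (f : R -> R) (l : R) := forall eps, 0 < eps -> exists a0 b0, 0 < a0 /\
  forall a b, 0 < a <= a0 -> b0 <= b -> ex_RInt f a b /\ Rabs (RInt f a b - l) < eps.

Lemma ball_R (x e y : R) : ball x e y <-> Rabs (y - x) < e.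
Proof. reflexivity. Qed.

Lemma IG_is f l : IG f l -> is_RInt_gen f (at_right 0) (Rbar_locally p_infty) l.
Proof.
  intros H P [eps HP].
  destruct (H eps (cond_pos eps)) as [a0 [b0 [Ha0 Hab]]].
  apply Filter_prod with (fun a => 0 < a <= a0) (fun b => b0 <= b).
  - exists (mkposreal a0 Ha0). intros y Hy Hy0. apply ball_R in Hy. simpl in Hy.
    split; auto. change (Rabs (y - 0) < a0) in Hy; rewrite Rminus_0_r in Hy. apply Rabs_def2 in Hy. lra.
  - exists b0. intros; lra.
  - intros a b Ha Hb. destruct (Hab a b Ha Hb) as [Hex Hl].
    exists (RInt f a b). split. exact (@RInt_correct R_CompleteNormedModule f a b Hex).
    apply HP. now apply ball_R.
Qed.

Lemma is_IG f l : is_RInt_gen f (at_right 0) (Rbar_locally p_infty) l -> IG f l.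
Proof.
  intros H eps Heps.
  assert (HP : locally l (fun y => Rabs (y - l) < eps)).
  { exists (mkposreal eps Heps). intros y Hy. now apply ball_R in Hy. }
  destruct (H _ HP) as [Q Rr [d Hd] [M HM] HQR].
  exists (d/2), (M+1). split. destruct d; simpl; lra.
  intros a b Ha Hb.
  assert (Qa : Q a). { apply Hd. apply ball_R. change (Rabs (a - 0) < d); rewrite Rminus_0_r. destruct d; simpl in *.
    rewrite Rabs_pos_eq; lra. lra. }
  destruct (HQR a b Qa (HM b ltac:(lra))) as [y [Hy1 Hy2]].
  simpl in Hy1. split. now exists y. now rewrite (is_RInt_unique _ _ _ _ Hy1).
Qed.

Lemma IG_Gamma_eq f x : IG f x -> RInt_gen f (at_right 0) (Rbar_locally p_infty) = x.
Proof.
  intros H. apply is_RInt_gen_unique. apply IG_is; auto.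
Qed.

Lemma RInt_split3 (f : R -> R) a a1 b1 b : 0 < a -> a <= a1 -> a1 <= b1 -> b1 <= b ->
  (forall a b, 0 < a -> a <= b -> ex_RInt f a b) ->
  RInt f a b = RInt f a a1 + RInt f a1 b1 + RInt f b1 b.
Proof.
  intros H1 H2 H3 H4 Hex.
  rewrite <- (RInt_Chasles f a a1 b) by (apply Hex; lra).
  rewrite <- (RInt_Chasles f a1 b1 b) by (apply Hex; lra).
  unfold plus; simpl. ring.
Qed.

Lemma IG_sup f M : (forall t, 0 < t -> 0 <= f t) ->
  (forall a b, 0 < a -> a <= b -> ex_RInt f a b) ->
  (forall a b, 0 < a -> a <= b -> RInt f a b <= M) ->
  exists l, IG f l /\ RInt f 1 2 <= l.
Proof.
  intros Hpos Hex HM.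
  set (E := fun y => exists a b, 0 < a <= b /\ y = RInt f a b).
  destruct (completeness E) as [m [Hub Hlub]].
  { exists M. intros y [a [b [Hab ->]]]. apply HM; lra. }
  { exists (RInt f 1 2). exists 1, 2. split; [lra|auto]. }
  exists m. split.
  - intros eps Heps.
    destruct (classic (exists y, E y /\ m - eps < y)) as [[y [[a1 [b1 [Hab1 ->]]] Hy]]|Hn].
    + exists a1, b1. split. lra. intros a b Ha Hb. split. apply Hex; lra.
      assert (Hy2 : RInt f a b <= m). { apply Hub. exists a, b. split; [lra|auto]. }
      pose proof (RInt_split3 f a a1 b1 b ltac:(lra) ltac:(lra) ltac:(lra) ltac:(lra) Hex) as Hs.
      assert (0 <= RInt f a a1). { apply RInt_ge_0. lra. apply Hex; lra. intros; apply Hpos; lra. }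
      assert (0 <= RInt f b1 b). { apply RInt_ge_0. lra. apply Hex; lra. intros; apply Hpos; lra. }
      apply Rabs_def1; lra.
    + exfalso. assert (m <= m - eps). { apply Hlub. intros y Ey. apply Rnot_lt_le. intro; apply Hn; eauto. }
      lra.
  - apply Hub. exists 1, 2. split; [lra|auto].
Qed.

Definition gf (x : R) := fun t => Rpower t (x - 1) * exp (- t).

Lemma gf_cont x t : 0 < t -> continuous (gf x) t.
Proof.
  intros Ht. apply (@ex_derive_continuous R_AbsRing R_NormedModule). unfold gf, Rpower. auto_derive. auto.
Qed.

Lemma gf_ex x a b : 0 < a -> a <= b -> ex_RInt (gf x) a b.
Proof.
  intros. apply (@ex_RInt_continuous R_CompleteNormedModule). intros t Ht. apply gf_cont.
  rewrite Rmin_left in Ht by lra. lra.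
Qed.

Lemma gf_pos x t : 0 < gf x t.
Proof. unfold gf, Rpower. apply Rmult_lt_0_compat; apply exp_pos. Qed.

Lemma ln_lt_id y : 0 < y -> ln y < y.
Proof.
  intros Hy. apply exp_lt_inv. rewrite exp_ln by auto.
  destruct (Req_dec y 0). lra. pose proof (exp_ineq1 y H). lra.
Qed.

Lemma K_lemma c : exists T, 1 <= T /\ forall t, T <= t -> c * ln t <= t / 2.
Proof.
  exists (16 * c * c + 1). split. nra.
  intros t Ht. pose proof (Rle_0_sqr c) as Hc2. unfold Rsqr in Hc2. destruct (Rle_dec c 0).
  - assert (0 <= ln t). { rewrite <- ln_1. apply ln_le; lra. } assert (c * ln t <= 0) by nra. pose proof (Rle_0_sqr c). unfold Rsqr in *. nra.
  - set (u := sqrt t). assert (Hu : u * u = t) by (apply sqrt_sqrt; nra).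
    assert (Hu0 : 0 <= u) by apply sqrt_pos.
    assert (Hl : ln t = 2 * ln u).
    { rewrite <- Hu. rewrite ln_mult; [ring| |]; nra. }
    assert (Hu1 : 0 < u) by nra.
    pose proof (ln_lt_id u Hu1).
    assert (4 * c <= u) by nra.
    rewrite Hl. nra.
Qed.

Definition mj x K t := K * (x / t * exp (x * ln t)) / ((1 + exp (x * ln t)) * (1 + exp (x * ln t))).

Lemma mj_cont x K t : 0 < t -> continuous (mj x K) t.
Proof.
  intros Ht. apply (@ex_derive_continuous R_AbsRing R_NormedModule). unfold mj. auto_derive.
  pose proof (exp_pos (x * ln t)). repeat split; try lra. nra.
Qed.

Lemma mj_int x K a b : 0 < a -> a <= b -> is_RInt (mj x K) a b (K / (1 + exp (x * ln a)) - K / (1 + exp (x * ln b))).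
Proof.
  intros Ha Hab.
  set (F := fun t => - K / (1 + exp (x * ln t))).
  assert (E : minus (F b) (F a) = K / (1 + exp (x * ln a)) - K / (1 + exp (x * ln b))).
  { pose proof (exp_pos (x * ln a)); pose proof (exp_pos (x * ln b)).
    unfold minus, plus, opp, F; simpl. change (@eq R (- K / (1 + exp (x * ln b)) + - (- K / (1 + exp (x * ln a)))) (K / (1 + exp (x * ln a)) - K / (1 + exp (x * ln b)))).
    field; split; lra. }
  rewrite <- E.
  apply (@is_RInt_derive R_CompleteNormedModule).
  - intros t Ht. rewrite Rmin_left, Rmax_right in Ht by lra. unfold F. auto_derive.
    pose proof (exp_pos (x * ln t)). repeat split; try lra.
    unfold mj. pose proof (exp_pos (x * ln t)). field. lra.
  - intros t Ht. rewrite Rmin_left in Ht by lra. apply mj_cont. lra.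
Qed.

Lemma exp_pow_split x t : 0 < t -> exp ((x - 1) * ln t) = exp (x * ln t) / t.
Proof.
  intros Ht. replace ((x - 1) * ln t) with (x * ln t + - ln t) by ring.
  rewrite exp_plus, exp_Ropp, exp_ln by auto. reflexivity.
Qed.

Lemma gf_bound x : 0 < x -> exists K, forall a b, 0 < a -> a <= b -> RInt (gf x) a b <= K.
Proof.
  intros Hx. destruct (K_lemma (2 * x)) as [T [HT1 HT]].
  set (B := 1 + exp (2 * x * ln T)).
  assert (HB : forall t, 0 < t -> exp (2 * x * ln t) * exp (- t) <= B).
  { intros t Ht. rewrite <- exp_plus. unfold B. pose proof (exp_pos (2 * x * ln T)).
    destruct (Rle_dec T t).
    - pose proof (HT t r). assert (exp (2 * x * ln t + - t) <= exp 0).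
      { destruct (Req_dec (2 * x * ln t + - t) 0) as [E|E]. rewrite E; lra.
        left; apply exp_increasing; lra. }
      rewrite exp_0 in H1. lra.
    - assert (ln t <= ln T) by (apply ln_le; lra).
      assert (exp (2 * x * ln t + - t) <= exp (2 * x * ln T)).
      { destruct (Req_dec (2 * x * ln t + - t) (2 * x * ln T)) as [E|E]. rewrite E; lra.
        left; apply exp_increasing; nra. }
      lra. }
  set (K := 2 * (1 + B) / x).
  exists K. intros a b Ha Hab.
  apply Rle_trans with (RInt (mj x K) a b).
  - apply RInt_le; auto.
    + apply (@ex_RInt_continuous R_CompleteNormedModule). intros t Ht. rewrite Rmin_left in Ht by lra.
      apply (@ex_derive_continuous R_AbsRing R_NormedModule). unfold gf, Rpower. auto_derive. lra.
    + eexists. apply mj_int; auto.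
    + intros t Ht. unfold gf, mj, Rpower. rewrite exp_pow_split by lra.
      set (v := exp (x * ln t)). set (E := exp (- t)).
      assert (Hv : 0 < v) by apply exp_pos. assert (HE : 0 < E) by apply exp_pos.
      assert (HE1 : E <= 1). { unfold E. rewrite <- exp_0. left. apply exp_increasing. lra. }
      assert (Hv2 : exp (2 * x * ln t) = v * v). { unfold v. rewrite <- exp_plus. f_equal. ring. }
      pose proof (HB t ltac:(lra)) as HBt. rewrite Hv2 in HBt. fold E in HBt.
      assert (0 <= E * ((v - 1) * (v - 1))) by (apply Rmult_le_pos; [lra | pose proof (Rle_0_sqr (v-1)) as Hq; unfold Rsqr in Hq; lra]).
      assert (HH : E * ((1 + v) * (1 + v)) <= 2 * (1 + B)) by nra.
      unfold K. replace (2 * (1 + B) / x * (x / t * v)) with (v / t * (2 * (1 + B))) by (field; lra).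
      assert (Hc : (1 + v) * (1 + v) > 0) by (apply Rmult_lt_0_compat; lra).
      apply (proj1 (Rle_div_r _ _ _ Hc)).
      replace (v / t * E * ((1 + v) * (1 + v))) with (v / t * (E * ((1 + v) * (1 + v)))) by ring.
      apply Rmult_le_compat_l. apply Rlt_le, Rdiv_lt_0_compat; lra. auto.
  - rewrite (is_RInt_unique _ _ _ _ (mj_int x K a b Ha Hab)).
    assert (0 < K). { unfold K, B. pose proof (exp_pos (2 * x * ln T)). apply Rdiv_lt_0_compat; lra. }
    pose proof (exp_pos (x * ln a)). pose proof (exp_pos (x * ln b)).
    assert (K / (1 + exp (x * ln b)) > 0) by (apply Rdiv_lt_0_compat; lra).
    assert (K / (1 + exp (x * ln a)) <= K).
    { apply Rle_div_l. lra. nra. }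
    lra.
Qed.

Lemma IG_unique f l1 l2 : IG f l1 -> IG f l2 -> l1 = l2.
Proof.
  intros H1 H2. apply Rle_antisym; apply Rnot_lt_le; intro Hlt.
  - destruct (H1 ((l1 - l2)/2) ltac:(lra)) as [a1 [b1 [Ha1 H1']]].
    destruct (H2 ((l1 - l2)/2) ltac:(lra)) as [a2 [b2 [Ha2 H2']]].
    destruct (H1' (Rmin a1 a2) (Rmax b1 b2)) as [_ E1].
    split. apply Rmin_glb_lt; auto. apply Rmin_l. apply Rmax_l.
    destruct (H2' (Rmin a1 a2) (Rmax b1 b2)) as [_ E2].
    split. apply Rmin_glb_lt; auto. apply Rmin_r. apply Rmax_r.
    apply Rabs_def2 in E1. apply Rabs_def2 in E2. lra.
  - destruct (H1 ((l2 - l1)/2) ltac:(lra)) as [a1 [b1 [Ha1 H1']]].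
    destruct (H2 ((l2 - l1)/2) ltac:(lra)) as [a2 [b2 [Ha2 H2']]].
    destruct (H1' (Rmin a1 a2) (Rmax b1 b2)) as [_ E1].
    split. apply Rmin_glb_lt; auto. apply Rmin_l. apply Rmax_l.
    destruct (H2' (Rmin a1 a2) (Rmax b1 b2)) as [_ E2].
    split. apply Rmin_glb_lt; auto. apply Rmin_r. apply Rmax_r.
    apply Rabs_def2 in E1. apply Rabs_def2 in E2. lra.
Qed.

Lemma Gamma_IG x : 0 < x -> IG (gf x) (Gamma x) /\ 0 < Gamma x.
Proof.
  intros Hx. destruct (gf_bound x Hx) as [K HK].
  destruct (IG_sup (gf x) K) as [l [Hl H12]].
  - intros; left; apply gf_pos.
  - intros; apply gf_ex; auto.
  - auto.
  - assert (E : Gamma x = l) by (unfold Gamma; change (RInt_gen (gf x) (at_right 0) (Rbar_locally p_infty) = l); exact (IG_Gamma_eq _ _ Hl)).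
    rewrite E. split; auto.
    assert (0 < RInt (gf x) 1 2). { apply RInt_gt_0. lra. intros; apply gf_pos. intros; apply gf_cont; lra. }
    lra.
Qed.

Lemma RInt_lin (f g : R -> R) a b (al be : R) : ex_RInt f a b -> ex_RInt g a b ->
  ex_RInt (fun t => al * f t + be * g t) a b /\
  RInt (fun t => al * f t + be * g t) a b = al * RInt f a b + be * RInt g a b.
Proof.
  intros Hf Hg.
  assert (H : is_RInt (fun t => al * f t + be * g t) a b (al * RInt f a b + be * RInt g a b)).
  { apply (is_RInt_plus (V := R_NormedModule) (fun t => al * f t) (fun t => be * g t)).
    apply (is_RInt_scal (V := R_NormedModule) f). apply (RInt_correct (V := R_CompleteNormedModule)); auto.
    apply (is_RInt_scal (V := R_NormedModule) g). apply (RInt_correct (V := R_CompleteNormedModule)); auto. }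
  split. eexists; eauto. apply is_RInt_unique; auto.
Qed.

Lemma small_exp_b eps : 0 < eps -> forall b, 2 / eps <= b -> exp (- (b / 2)) < eps.
Proof.
  intros He b Hb. rewrite exp_Ropp.
  assert (0 < b) by (assert (0 < 2 / eps) by (apply Rdiv_lt_0_compat; lra); lra).
  pose proof (exp_ineq1 (b/2) ltac:(lra)).
  assert (1 / eps < exp (b / 2)).
  { assert (b / 2 >= 1 / eps). { unfold Rdiv in *. lra. } lra. }
  apply (Rmult_lt_reg_l (exp (b/2))). apply exp_pos.
  rewrite Rinv_r by (apply Rgt_not_eq, exp_pos).
  apply (Rmult_lt_reg_r (/ eps)). apply Rinv_0_lt_compat; auto.
  replace (exp (b / 2) * eps * / eps) with (exp (b/2)) by (field; lra). lra.
Qed.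

Lemma small_pow_a x eps : 0 < x -> 0 < eps -> exists d, 0 < d /\ forall a, 0 < a < d -> exp (x * ln a) < eps.
Proof.
  intros Hx He. exists (exp (ln eps / x)). split. apply exp_pos.
  intros a [Ha Had]. rewrite <- (exp_ln eps) by auto. apply exp_increasing.
  pose proof (ln_increasing _ _ Ha Had). rewrite ln_exp in H.
  apply (Rmult_lt_compat_l x) in H; auto. replace (x * (ln eps / x)) with (ln eps) in H by (field; lra). lra.
Qed.

Lemma parts x a b : 0 < x -> 0 < a -> a <= b ->
  RInt (gf (x + 1)) a b = exp (x * ln a) * exp (- a) - exp (x * ln b) * exp (- b) + x * RInt (gf x) a b.
Proof.
  intros Hx Ha Hab.
  set (F := fun t => - (exp (x * ln t) * exp (- t))).
  set (d := fun t => 1 * gf (x + 1) t + (- x) * gf x t).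
  assert (H1 : is_RInt d a b (minus (F b) (F a))).
  { apply (@is_RInt_derive R_CompleteNormedModule).
    - intros t Ht. rewrite Rmin_left, Rmax_right in Ht by lra. unfold F. auto_derive. lra.
      unfold d, gf, Rpower. replace (x + 1 - 1) with x by ring. rewrite exp_pow_split by lra.
      field. lra.
    - intros t Ht. rewrite Rmin_left, Rmax_right in Ht by lra. unfold d.
      apply (@ex_derive_continuous R_AbsRing R_NormedModule). unfold gf, Rpower. auto_derive. lra. }
  destruct (RInt_lin (gf (x + 1)) (gf x) a b 1 (- x)) as [_ E2].
  apply gf_ex; auto. apply gf_ex; auto.
  fold d in E2. rewrite (is_RInt_unique _ _ _ _ H1) in E2.
  unfold minus, plus, opp, F in E2. simpl in E2. lra.
Qed.

Lemma Gamma_rec x : 0 < x -> Gamma (x + 1) = x * Gamma x.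
Proof.
  intros Hx. destruct (Gamma_IG x Hx) as [HG _]. destruct (Gamma_IG (x + 1) ltac:(lra)) as [HG1 _].
  apply (IG_unique (gf (x + 1))); auto.
  intros eps He.
  destruct (HG (eps / (3 * x)) ltac:(apply Rdiv_lt_0_compat; lra)) as [a0 [b0 [Ha0 Hab0]]].
  destruct (small_pow_a x (eps / 3) Hx ltac:(lra)) as [dl [Hd Hdl]].
  destruct (K_lemma x) as [T [HT1 HT]].
  exists (Rmin a0 (dl / 2)), (Rmax b0 (Rmax T (2 / (eps / 3) + a0))).
  split. apply Rmin_glb_lt; lra.
  intros a b Ha Hb.
  assert (Ha1 : a <= a0) by (eapply Rle_trans; [apply Ha| apply Rmin_l]).
  assert (Ha2 : a <= dl / 2) by (eapply Rle_trans; [apply Ha| apply Rmin_r]).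
  assert (Hb1 : b0 <= b) by (eapply Rle_trans; [apply Rmax_l| apply Hb]).
  assert (Hb2 : Rmax T (2 / (eps / 3) + a0) <= b) by (eapply Rle_trans; [apply Rmax_r| apply Hb]).
  assert (HbT : T <= b) by (eapply Rle_trans; [apply Rmax_l| apply Hb2]).
  assert (Hbe' : 2 / (eps / 3) + a0 <= b) by (eapply Rle_trans; [apply Rmax_r| apply Hb2]).
  assert (Hbe : 2 / (eps / 3) <= b) by lra.
  assert (0 < 2 / (eps / 3)) by (apply Rdiv_lt_0_compat; lra).
  assert (Hab : a <= b) by (destruct Ha; lra).
  split. apply gf_ex; destruct Ha; lra.
  rewrite parts by lra.
  destruct (Hab0 a b ltac:(split; lra) Hb1) as [_ Hc].
  assert (A1 : 0 < exp (x * ln a) * exp (- a) < eps / 3).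
  { pose proof (Hdl a ltac:(lra)). pose proof (exp_pos (x * ln a)).
    assert (exp (- a) < 1). { rewrite <- exp_0. apply exp_increasing. lra. }
    split. apply Rmult_lt_0_compat; auto; apply exp_pos. pose proof (exp_pos (-a)). nra. }
  assert (A2 : 0 < exp (x * ln b) * exp (- b) < eps / 3).
  { split. apply Rmult_lt_0_compat; apply exp_pos.
    rewrite <- exp_plus. pose proof (HT b HbT).
    pose proof (small_exp_b (eps / 3) ltac:(lra) b Hbe).
    assert (exp (x * ln b + - b) <= exp (- (b / 2))).
    { destruct (Req_dec (x * ln b + - b) (- (b / 2))) as [E|E]. rewrite E; lra.
      left; apply exp_increasing; lra. }
    lra. }
  apply Rabs_def2 in Hc.
  assert (x * (eps / (3 * x)) = eps / 3) by (field; lra).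
  apply Rabs_def1; nra.
Qed.

Lemma Gamma_1 : Gamma 1 = 1.
Proof.
  destruct (Gamma_IG 1 ltac:(lra)) as [HG _].
  apply (IG_unique (gf 1)); auto.
  intros eps He. exists (eps / 2), (2 / (eps / 2) + eps / 2). split. lra.
  intros a b [Ha Ha0] Hb.
  assert (0 < 2 / (eps / 2)) by (apply Rdiv_lt_0_compat; lra).
  assert (Hab : a <= b) by lra.
  split. apply gf_ex; lra.
  set (F := fun t => - exp (- t)).
  assert (H1 : is_RInt (gf 1) a b (minus (F b) (F a))).
  { apply (@is_RInt_derive R_CompleteNormedModule).
    - intros t Ht. rewrite Rmin_left, Rmax_right in Ht by lra. unfold F. auto_derive. auto.
      unfold gf, Rpower. replace (1 - 1) with 0 by ring. rewrite Rmult_0_l, exp_0. ring.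
    - intros t Ht. rewrite Rmin_left, Rmax_right in Ht by lra. apply gf_cont. lra. }
  rewrite (is_RInt_unique _ _ _ _ H1). unfold minus, plus, opp, F. simpl.
  pose proof (exp_ineq1 (- a) ltac:(lra)).
  assert (exp (- a) < 1). { rewrite <- exp_0. apply exp_increasing. lra. }
  pose proof (small_exp_b (eps / 2) ltac:(lra) b ltac:(lra)).
  assert (exp (- b) < exp (- (b / 2))) by (apply exp_increasing; lra).
  pose proof (exp_pos (- b)).
  apply Rabs_def1; lra.
Qed.

Lemma amgm u v w lam : 0 < u -> 0 < v -> 0 < w -> 0 < lam -> w * w = u * v ->
  w <= lam / 2 * u + / (2 * lam) * v.
Proof.
  intros Hu Hv Hw Hl Hwuv.
  set (p := lam * u). set (r := v / lam).
  assert (Hpr : p * r = w * w) by (unfold p, r; rewrite Hwuv; field; lra).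
  assert (0 < p) by (unfold p; apply Rmult_lt_0_compat; lra). assert (0 < r) by (unfold r; apply Rdiv_lt_0_compat; lra).
  replace (lam / 2 * u + / (2 * lam) * v) with ((p + r) / 2) by (unfold p, r; field; lra).
  apply Rnot_lt_le. intro Hc.
  assert ((p + r) * (p + r) < 4 * (w * w)) by nra.
  pose proof (Rle_0_sqr (p - r)) as Hq. unfold Rsqr in Hq.
  assert (E1 : (p + r) * (p + r) = (p - r) * (p - r) + 4 * (p * r)) by ring.
  lra.
Qed.

Lemma le_eps A B C : 0 < C -> (forall eps, 0 < eps -> A < B + eps * C) -> A <= B.
Proof.
  intros HC H. apply Rnot_lt_le. intro Hc.
  pose proof (H ((A - B) / C) ltac:(apply Rdiv_lt_0_compat; lra)).
  replace ((A - B) / C * C) with (A - B) in H0 by (field; lra). lra.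
Qed.

Lemma Gamma_amgm x lam : 0 < x -> 0 < lam ->
  Gamma (x + 1 / 2) <= lam / 2 * Gamma x + / (2 * lam) * Gamma (x + 1).
Proof.
  intros Hx Hl.
  destruct (Gamma_IG x Hx) as [H0 _].
  destruct (Gamma_IG (x + 1) ltac:(lra)) as [H1 _].
  destruct (Gamma_IG (x + 1 / 2) ltac:(lra)) as [H2 _].
  apply (le_eps _ _ (1 + lam / 2 + / (2 * lam))).
  { assert (0 < / (2 * lam)) by (apply Rinv_0_lt_compat; lra). lra. }
  intros eps He.
  destruct (H0 eps He) as [a0 [b0 [Ha0 K0]]].
  destruct (H1 eps He) as [a1 [b1 [Ha1 K1]]].
  destruct (H2 eps He) as [a2 [b2 [Ha2 K2]]].
  pose proof (Rmin_l a0 (Rmin a1 a2)). pose proof (Rmin_r a0 (Rmin a1 a2)).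
  pose proof (Rmin_l a1 a2). pose proof (Rmin_r a1 a2).
  pose proof (Rmax_l (Rmax b0 (Rmax b1 b2)) (a0 + 1)). pose proof (Rmax_r (Rmax b0 (Rmax b1 b2)) (a0 + 1)).
  pose proof (Rmax_l b0 (Rmax b1 b2)). pose proof (Rmax_r b0 (Rmax b1 b2)).
  pose proof (Rmax_l b1 b2). pose proof (Rmax_r b1 b2). 
  set (a := Rmin a0 (Rmin a1 a2)) in *. set (b := Rmax (Rmax b0 (Rmax b1 b2)) (a0 + 1)) in *.
  assert (Ha : 0 < a) by (unfold a; repeat apply Rmin_glb_lt; lra).
  assert (Hab0 : a <= a0) by lra. assert (Hab1 : a <= a1) by lra. assert (Hab2 : a <= a2) by lra.
  assert (Hb0 : b0 <= b) by lra. assert (Hb1 : b1 <= b) by lra. assert (Hb2 : b2 <= b) by lra.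
  assert (Hab : a <= b) by lra.
  destruct (K0 a b ltac:(split; lra) Hb0) as [E0 D0].
  destruct (K1 a b ltac:(split; lra) Hb1) as [E1 D1].
  destruct (K2 a b ltac:(split; lra) Hb2) as [E2 D2].
  destruct (RInt_lin (gf x) (gf (x + 1)) a b (lam / 2) (/ (2 * lam)) E0 E1) as [El Il].
  assert (Hle : RInt (gf (x + 1 / 2)) a b <= RInt (fun t => lam / 2 * gf x t + / (2 * lam) * gf (x + 1) t) a b).
  { apply RInt_le; auto. intros t Ht. unfold gf, Rpower.
    set (E := exp (- t)). set (u := exp ((x - 1) * ln t)). set (v := exp ((x + 1 - 1) * ln t)).
    set (w := exp ((x + 1 / 2 - 1) * ln t)).
    assert (Hw : w <= lam / 2 * u + / (2 * lam) * v).
    { apply amgm; try apply exp_pos; auto. unfold u, v, w. rewrite <- !exp_plus. f_equal. field. }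
    replace (lam / 2 * (u * E) + / (2 * lam) * (v * E)) with ((lam / 2 * u + / (2 * lam) * v) * E) by ring.
    apply Rmult_le_compat_r. left; apply exp_pos. auto. }
  rewrite Il in Hle.
  apply Rabs_def2 in D0. apply Rabs_def2 in D1. apply Rabs_def2 in D2.
  assert (0 < / (2 * lam)) by (apply Rinv_0_lt_compat; lra).
  assert (lam / 2 * RInt (gf x) a b < lam / 2 * (Gamma x + eps)) by (apply Rmult_lt_compat_l; lra).
  assert (/ (2 * lam) * RInt (gf (x + 1)) a b < / (2 * lam) * (Gamma (x + 1) + eps)) by (apply Rmult_lt_compat_l; lra).
  nra.
Qed.

Lemma Gautschi_up x : 0 < x -> Gamma (x + 1 / 2) <= sqrt x * Gamma x.
Proof.
  intros Hx. pose proof (sqrt_lt_R0 x Hx) as Hs. pose proof (sqrt_sqrt x ltac:(lra)) as Hss.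
  pose proof (Gamma_amgm x (sqrt x) Hx Hs). rewrite Gamma_rec in H by auto.
  replace (sqrt x / 2 * Gamma x + / (2 * sqrt x) * (x * Gamma x)) with (sqrt x * Gamma x) in H; auto.
  replace (x * Gamma x) with (sqrt x * sqrt x * Gamma x) by (rewrite Hss; ring). field. lra.
Qed.

Lemma Gautschi_low x : 0 < x -> Gamma (x + 1) <= sqrt (x + 1 / 2) * Gamma (x + 1 / 2).
Proof.
  intros Hx. set (y := x + 1 / 2). assert (Hy : 0 < y) by (unfold y; lra).
  pose proof (sqrt_lt_R0 y Hy) as Hs. pose proof (sqrt_sqrt y ltac:(lra)) as Hss.
  pose proof (Gamma_amgm y (sqrt y) Hy Hs). rewrite Gamma_rec in H by auto.
  replace (y + 1 / 2) with (x + 1) in H by (unfold y; field).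
  replace (sqrt y / 2 * Gamma y + / (2 * sqrt y) * (y * Gamma y)) with (sqrt y * Gamma y) in H; auto.
  replace (y * Gamma y) with (sqrt y * sqrt y * Gamma y) by (rewrite Hss; ring). field. lra.
Qed.

Fixpoint wa (n : nat) : R := match n with O => 1 | S m => wa m * (2 * INR m + 1) / (2 * INR m + 2) end.

Lemma wa_pos n : 0 < wa n.
Proof.
  induction n; simpl. lra. pose proof (pos_INR n).
  apply Rdiv_lt_0_compat; [apply Rmult_lt_0_compat|]; lra.
Qed.

Lemma GH n : Gamma (INR n + 1 / 2) = Gamma (1 / 2) * wa n * Gamma (INR n + 1).
Proof.
  induction n.
  - simpl. replace (0 + 1 / 2) with (1 / 2) by field. replace (0 + 1) with 1 by ring. rewrite Gamma_1. ring.
  - rewrite S_INR. pose proof (pos_INR n).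
    replace (INR n + 1 + 1 / 2) with ((INR n + 1 / 2) + 1) by field.
    rewrite Gamma_rec by lra. rewrite Gamma_rec by lra. rewrite IHn. simpl wa.
    field. lra.
Qed.

Definition W (n : nat) := RInt (fun x => sin x ^ n) 0 (PI / 2).

Lemma sinpow_ex n a b : ex_RInt (fun x => sin x ^ n) a b.
Proof.
  apply (@ex_RInt_continuous R_CompleteNormedModule). intros t _.
  apply (@ex_derive_continuous R_AbsRing R_NormedModule). auto_derive. auto.
Qed.

Lemma W_rec m : (INR m + 2) * W (S (S m)) = (INR m + 1) * W m.
Proof.
  pose proof PI_RGT_0.
  set (g := fun x => - (cos x * sin x ^ (S m))).
  assert (H1 : is_RInt (fun x => (INR m + 2) * sin x ^ (S (S m)) + (- (INR m + 1)) * sin x ^ m) 0 (PI / 2)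
                 (minus (g (PI / 2)) (g 0))).
  { apply (@is_RInt_derive R_CompleteNormedModule).
    - intros t _. unfold g. auto_derive. auto.
      pose proof (sin2_cos2 t) as Hsc. unfold Rsqr in Hsc. change (match m with 0%nat => 1 | S _ => INR m + 1 end) with (INR (S m)). rewrite S_INR. replace (sin t ^ S (S m)) with (sin t * (sin t * sin t ^ m)) by reflexivity.
      assert (Hc : cos t * cos t = 1 - sin t * sin t) by lra.
      replace (cos t * (1 * cos t * ((INR m + 1) * sin t ^ m))) with ((cos t * cos t) * ((INR m + 1) * sin t ^ m)) by ring. rewrite Hc. ring.
    - intros t _. apply (@ex_derive_continuous R_AbsRing R_NormedModule). auto_derive. auto. }
  assert (Hg : minus (g (PI / 2)) (g 0) = 0).
  { unfold minus, plus, opp, g. simpl. rewrite sin_0, cos_PI2. change (@eq R (- (0 * (sin (PI/2) * sin (PI / 2) ^ m)) + - - (cos 0 * (0 * 0 ^ m))) 0). ring. }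
  rewrite Hg in H1.
  destruct (RInt_lin (fun x => sin x ^ S (S m)) (fun x => sin x ^ m) 0 (PI / 2) (INR m + 2) (- (INR m + 1))
    (sinpow_ex _ _ _) (sinpow_ex _ _ _)) as [_ E].
  rewrite (is_RInt_unique _ _ _ _ H1) in E. unfold W. lra.
Qed.

Lemma W0 : W 0 = PI / 2.
Proof.
  unfold W. change (RInt (fun _ => 1) 0 (PI / 2) = PI / 2).
  rewrite RInt_const. unfold scal; simpl. unfold mult; simpl. ring.
Qed.

Lemma W1 : W 1 = 1.
Proof.
  unfold W. set (g := fun x => - cos x).
  assert (H1 : is_RInt (fun x => sin x ^ 1) 0 (PI / 2) (minus (g (PI / 2)) (g 0))).
  { apply (@is_RInt_derive R_CompleteNormedModule).
    - intros t _. unfold g. auto_derive. auto. ring.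
    - intros t _. apply (@ex_derive_continuous R_AbsRing R_NormedModule). auto_derive. auto. }
  rewrite (is_RInt_unique _ _ _ _ H1). unfold minus, plus, opp, g. simpl.
  rewrite cos_0, cos_PI2. change (@eq R (- 0 + - - 1) 1). ring.
Qed.

Lemma W_mono n : W (S n) <= W n.
Proof.
  pose proof PI_RGT_0. unfold W. apply RInt_le. lra. apply sinpow_ex. apply sinpow_ex.
  intros t Ht. simpl. assert (0 <= sin t) by (apply sin_ge_0; lra).
  pose proof (SIN_bound t). assert (0 <= sin t ^ n) by (apply pow_le; auto). nra.
Qed.

Lemma INR2 : INR 2 = 2. Proof. simpl. ring. Qed.
Lemma INR1 : INR 1 = 1. Proof. reflexivity. Qed.

Lemma W_even n : W (2 * n) = PI / 2 * wa n.
Proof.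
  induction n.
  - simpl. rewrite W0. ring.
  - replace (2 * S n)%nat with (S (S (2 * n))) by lia.
    pose proof (W_rec (2 * n)). rewrite mult_INR in H. rewrite (INR2) in H.
    pose proof (pos_INR n). simpl wa. rewrite IHn in H.
    apply (Rmult_eq_reg_l (2 * INR n + 2)). rewrite H. field. lra. lra.
Qed.

Lemma W_odd n : W (2 * n + 1) = 1 / ((2 * INR n + 1) * wa n).
Proof.
  pose proof (wa_pos n). induction n.
  - simpl. rewrite W1. field.
  - replace (2 * S n + 1)%nat with (S (S (2 * n + 1))) by lia.
    pose proof (W_rec (2 * n + 1)). rewrite plus_INR, mult_INR in H0. rewrite INR2, INR1 in H0.
    pose proof (pos_INR n). pose proof (wa_pos n). rewrite IHn in H0 by auto. simpl wa. rewrite S_INR.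
    apply (Rmult_eq_reg_l (2 * INR n + 1 + 2)). rewrite H0. field. split; lra. lra.
Qed.

Lemma wallis_bounds k : (1 <= k)%nat ->
  1 / (INR k + 1 / 2) <= PI * wa k * wa k <= 1 / INR k.
Proof.
  intros Hk. destruct k as [|n]. lia.
  pose proof (W_mono (2 * S n)) as M1. pose proof (W_mono (2 * n + 1)) as M2.
  replace (S (2 * S n)) with (2 * S n + 1)%nat in M1 by lia.
  replace (S (2 * n + 1)) with (2 * S n)%nat in M2 by lia.
  rewrite W_odd in M1. rewrite W_odd in M2. rewrite W_even in M1. rewrite W_even in M2.
  pose proof (wa_pos n) as HB. pose proof (wa_pos (S n)) as HA.
  assert (Heq : wa (S n) = wa n * (2 * INR n + 1) / (2 * INR n + 2)) by reflexivity.
  rewrite S_INR in *. set (A := wa (S n)) in *. set (B := wa n) in *. set (r := INR n) in *.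
  pose proof (pos_INR n) as Hr. fold r in Hr. pose proof PI_RGT_0.
  assert (HA2 : 0 < 2 * A) by lra.
  split.
  - apply (Rmult_le_compat_l (2 * A)) in M1; [|lra].
    replace (2 * A * (1 / ((2 * (r + 1) + 1) * A))) with (1 / (r + 1 + 1 / 2)) in M1 by (field; lra).
    replace (2 * A * (PI / 2 * A)) with (PI * A * A) in M1 by field. auto.
  - apply (Rmult_le_compat_l (2 * A)) in M2; [|lra].
    replace (2 * A * (PI / 2 * A)) with (PI * A * A) in M2 by field.
    replace (2 * A * (1 / ((2 * r + 1) * B))) with (1 / (r + 1)) in M2. auto.
    rewrite Heq. field. lra.
Qed.

Lemma small_k d : 0 < d -> exists k : nat, (1 <= k)%nat /\ PI / (2 * INR k) < d.
Proof.
  intros Hd. pose proof PI_RGT_0.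
  assert (0 <= PI / (2 * d)) by (left; apply Rdiv_lt_0_compat; lra).
  destruct (nfloor_ex _ H0) as [n [Hn1 Hn2]].
  exists (S n). split. lia. rewrite S_INR. pose proof (pos_INR n).
  apply (Rmult_lt_reg_r (2 * (INR n + 1))). lra.
  replace (PI / (2 * (INR n + 1)) * (2 * (INR n + 1))) with PI by (field; lra).
  replace (PI / (2 * d)) with (PI / d / 2) in Hn2 by (field; lra).
  apply (Rmult_lt_compat_r (2 * d)) in Hn2; [|lra].
  replace (PI / d / 2 * (2 * d)) with PI in Hn2 by (field; lra). lra.
Qed.

Lemma G_bounds k : (1 <= k)%nat ->
  let G := Gamma (1 / 2) in
  PI * INR k / (INR k + 1 / 2) <= G * G <= PI * (INR k + 1 / 2) / INR k.
Proof.
  intros Hk G. destruct k as [|n]. lia.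
  destruct (Gamma_IG (1/2) ltac:(lra)) as [_ HG0]. fold G in HG0.
  pose proof (wallis_bounds (S n) Hk) as [W1 W2].
  pose proof (wa_pos (S n)) as HA.
  pose proof (pos_INR n) as Hn.
  pose proof (Gautschi_up (INR (S n) + 1 / 2) ltac:(rewrite S_INR; lra)) as Ga.
  replace (INR (S n) + 1 / 2 + 1 / 2) with (INR (S n) + 1) in Ga by field.
  rewrite GH in Ga. fold G in Ga.
  destruct (Gamma_IG (INR (S n) + 1) ltac:(rewrite S_INR; lra)) as [_ HGk].
  pose proof (Gautschi_low (INR n + 1 / 2) ltac:(lra)) as Gb.
  replace (INR n + 1 / 2 + 1) with (INR (S n) + 1 / 2) in Gb by (rewrite S_INR; field).
  replace (INR n + 1 / 2 + 1 / 2) with (INR n + 1) in Gb by field.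
  rewrite GH in Gb. fold G in Gb.
  replace (INR (S n) + 1) with (INR n + 1 + 1) in Gb by (rewrite S_INR; ring).
  rewrite Gamma_rec in Gb by lra.
  destruct (Gamma_IG (INR n + 1) ltac:(lra)) as [_ HGn].
  rewrite S_INR in *.
  set (A := wa (S n)) in *. set (r := INR n) in *.
  set (g1 := Gamma (r + 1 + 1)) in *. set (g0 := Gamma (r + 1)) in *.
  set (k := r + 1) in *. set (h := k + 1 / 2) in *.
  assert (Hk0 : 0 < k) by (unfold k; lra). assert (Hh0 : 0 < h) by (unfold h; lra).
  set (u := G * A) in *. assert (Hu : 0 < u) by (unfold u; apply Rmult_lt_0_compat; lra).
  pose proof (sqrt_sqrt h ltac:(lra)) as Sh. pose proof (sqrt_sqrt k ltac:(lra)) as Sk.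
  pose proof (sqrt_pos h). pose proof (sqrt_pos k).
  assert (S1 : 1 <= sqrt h * u).
  { apply (Rmult_le_reg_r g1); auto. rewrite Rmult_1_l. replace (sqrt h * u * g1) with (sqrt h * (u * g1)) by ring. auto. }
  assert (S2 : u * k <= sqrt k).
  { apply (Rmult_le_reg_r g0); auto. replace (u * k * g0) with (u * (k * g0)) by ring. auto. }
  assert (Q1 : 1 <= h * (u * u)).
  { replace (h * (u * u)) with ((sqrt h * u) * (sqrt h * u)).
    2: { transitivity (sqrt h * sqrt h * (u * u)). ring. rewrite Sh. reflexivity. }
    replace 1 with (1 * 1) by ring. apply Rmult_le_compat; lra. }
  assert (Q2 : (u * k) * (u * k) <= k).
  { apply Rle_trans with (sqrt k * sqrt k); [|lra].
    apply Rmult_le_compat; try lra; apply Rmult_le_pos; lra. }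
  assert (Q3 : u * u <= 1 / k).
  { apply (Rmult_le_reg_r (k * k)). nra. replace (1 / k * (k * k)) with k by (field; lra).
    replace (u * u * (k * k)) with ((u * k) * (u * k)) by ring. auto. }
  assert (Q4 : 1 / h <= u * u).
  { apply (Rmult_le_reg_r h). auto. replace (1 / h * h) with 1 by (field; lra). lra. }
  assert (EG : G * G * (PI * A * A) = PI * (u * u)) by (unfold u; ring).
  assert (HGG : 0 < G * G) by nra.
  split.
  - (* lower: G^2 * (1/k) >= G^2 * PI A^2 = PI u^2 >= PI/h *)
    assert (L1 : G * G * (PI * A * A) <= G * G * (1 / k)) by (apply Rmult_le_compat_l; lra).
    assert (L2 : PI * (1 / h) <= PI * (u * u)) by (apply Rmult_le_compat_l; pose proof PI_RGT_0; lra).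
    apply (Rmult_le_reg_r (1 / k)). apply Rdiv_lt_0_compat; lra.
    replace (PI * k / h * (1 / k)) with (PI * (1 / h)) by (field; lra). lra.
  - assert (L1 : G * G * (1 / h) <= G * G * (PI * A * A)) by (apply Rmult_le_compat_l; lra).
    assert (L2 : PI * (u * u) <= PI * (1 / k)) by (apply Rmult_le_compat_l; pose proof PI_RGT_0; lra).
    apply (Rmult_le_reg_r (1 / h)). apply Rdiv_lt_0_compat; lra.
    replace (PI * h / k * (1 / h)) with (PI * (1 / k)) by (field; lra). lra.
Qed.

Lemma Gamma_half : Gamma (1 / 2) = sqrt PI.
Proof.
  destruct (Gamma_IG (1/2) ltac:(lra)) as [_ HG0].
  pose proof PI_RGT_0.
  symmetry. apply sqrt_lem_1. lra. lra.
  apply Rle_antisym; apply Rnot_lt_le; intro Hc.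
  - destruct (small_k (Gamma (1/2) * Gamma (1/2) - PI) ltac:(lra)) as [k [Hk Hd]].
    destruct (G_bounds k Hk) as [_ B]. pose proof (lt_0_INR k ltac:(lia)).
    replace (PI * (INR k + 1 / 2) / INR k) with (PI + PI / (2 * INR k)) in B by (field; lra). lra.
  - destruct (small_k (PI - Gamma (1/2) * Gamma (1/2)) ltac:(lra)) as [k [Hk Hd]].
    destruct (G_bounds k Hk) as [B _]. pose proof (lt_0_INR k ltac:(lia)).
    assert (PI * INR k / (INR k + 1 / 2) >= PI - PI / (2 * INR k)).
    { replace (PI * INR k / (INR k + 1 / 2)) with (PI - PI / (2 * INR k + 1)) by (field; lra).
      assert (PI / (2 * INR k + 1) <= PI / (2 * INR k)).
      { apply Rmult_le_compat_l. lra. apply Rinv_le_contravar; lra. }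
      lra. }
    lra.
Qed.

Definition hp (z t : R) : R := if Rlt_dec 0 t then Rpower t (z - 1) else 0.

Lemma hp_pos z t : 0 < t -> hp z t = exp ((z - 1) * ln t).
Proof. intros Ht. unfold hp. destruct (Rlt_dec 0 t); [reflexivity | lra]. Qed.

Lemma hp_nonpos z t : t <= 0 -> hp z t = 0.
Proof. intros Ht. unfold hp. destruct (Rlt_dec 0 t); [lra | reflexivity]. Qed.

Lemma hp_ge0 z t : 0 <= hp z t.
Proof. unfold hp. destruct (Rlt_dec 0 t). left; apply exp_pos. lra. Qed.

Lemma hp_small z : 1 < z -> forall eps, 0 < eps -> exists d, 0 < d /\ forall t, Rabs t < d -> hp z t < eps.
Proof.
  intros Hz eps He. destruct (small_pow_a (z - 1) eps ltac:(lra) He) as [d [Hd Hdl]].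
  exists d. split; auto. intros t Ht. destruct (Rle_dec t 0).
  - rewrite hp_nonpos; auto.
  - rewrite hp_pos by lra. apply Hdl. split. lra. rewrite Rabs_pos_eq in Ht; lra.
Qed.

Lemma hp_cont z t : 1 < z -> 0 <= t -> continuous (hp z) t.
Proof.
  intros Hz Ht. destruct (Req_dec t 0) as [E|E].
  - subst t. apply continuity_pt_filterlim. intros eps He.
    destruct (hp_small z Hz eps He) as [d [Hd Hdl]]. exists d. split; auto.
    intros x [_ Hx]. unfold dist; simpl; unfold R_dist. rewrite (hp_nonpos z 0) by lra.
    rewrite Rminus_0_r, Rabs_pos_eq by apply hp_ge0. apply Hdl. unfold dist in Hx; simpl in Hx; unfold R_dist in Hx. rewrite Rminus_0_r in Hx. auto.
  - apply (continuous_ext_loc _ (fun y => exp ((z - 1) * ln y))).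
    + apply (locally_interval _ t 0 p_infty). simpl; lra. simpl; auto.
      intros y Hy _. simpl in Hy. rewrite hp_pos; auto.
    + apply (@ex_derive_continuous R_AbsRing R_NormedModule). auto_derive. lra.
Qed.

Lemma hp_deriv z t : 1 < z -> 0 <= t -> is_derive (fun y => y * hp z y / z) t (hp z t).
Proof.
  intros Hz Ht. destruct (Req_dec t 0) as [E|E].
  - subst t. rewrite (hp_nonpos z 0) by lra. apply is_derive_Reals.
    intros eps He. destruct (hp_small z Hz (eps * z) ltac:(nra)) as [d [Hd Hdl]].
    exists (mkposreal d Hd). intros h Hh0 Hh. simpl in Hh.
    rewrite Rplus_0_l, (hp_nonpos z 0) by lra.
    replace ((h * hp z h / z - 0 * 0 / z) / h - 0) with (hp z h / z) by (field; lra).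
    rewrite Rabs_pos_eq. apply (Rmult_lt_reg_r z). lra.
    replace (hp z h / z * z) with (hp z h) by (field; lra). auto.
    apply Rdiv_le_0_compat. apply hp_ge0. lra.
  - apply (is_derive_ext_loc (fun y => exp (z * ln y) / z)).
    + apply (locally_interval _ t 0 p_infty). simpl; lra. simpl; auto.
      intros y Hy _. simpl in Hy. rewrite hp_pos by auto. rewrite exp_pow_split by auto. match goal with |- ?a = ?b => change (@eq R a b) end. field. lra.
    + auto_derive. lra. rewrite hp_pos by lra. rewrite exp_pow_split by lra. field. lra.
Qed.

Lemma hp_int z s : 1 < z -> 0 < s -> is_RInt (hp z) 0 s (Rpower s z / z).
Proof.
  intros Hz Hs.
  set (Hf := fun y => y * hp z y / z).
  assert (E : minus (Hf s) (Hf 0) = Rpower s z / z).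
  { unfold minus, plus, opp, Hf. simpl. rewrite hp_pos, (hp_nonpos z 0) by lra.
    unfold Rpower. rewrite exp_pow_split by lra.
    change (@eq R (s * (exp (z * ln s) / s) / z + - (0 * 0 / z)) (exp (z * ln s) / z)). field. lra. }
  rewrite <- E. apply (@is_RInt_derive R_CompleteNormedModule).
  - intros t Ht. rewrite Rmin_left, Rmax_right in Ht by lra. unfold Hf. apply hp_deriv; lra.
  - intros t Ht. rewrite Rmin_left, Rmax_right in Ht by lra. apply hp_cont; lra.
Qed.

Lemma J_bounds z s : 1 < z -> 0 < s < 1 ->
  Rpower s z / z <= RInt (fun t => Rpower t (z - 1) * Rpower (1 - t) (1 / 2 - 1)) 0 s <=
  / sqrt (1 - s) * (Rpower s z / z).
Proof.
  intros Hz [Hs0 Hs1].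
  set (k := fun t => hp z t * / sqrt (1 - t)).
  assert (Ek : RInt (fun t => Rpower t (z - 1) * Rpower (1 - t) (1 / 2 - 1)) 0 s = RInt k 0 s).
  { apply RInt_ext. intros t Ht. rewrite Rmin_left, Rmax_right in Ht by lra. unfold k.
    rewrite hp_pos by lra. unfold Rpower at 1.
    replace (1 / 2 - 1) with (- (/ 2)) by field. rewrite Rpower_Ropp, Rpower_sqrt by lra. reflexivity. }
  rewrite Ek.
  assert (Hexh : ex_RInt (hp z) 0 s) by (eexists; apply hp_int; auto).
  assert (Hexk : ex_RInt k 0 s).
  { apply (@ex_RInt_continuous R_CompleteNormedModule). intros t Ht.
    rewrite Rmin_left, Rmax_right in Ht by lra. unfold k.
    apply (continuous_mult (K := R_AbsRing) (hp z) (fun t => / sqrt (1 - t))).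
    apply hp_cont; lra.
    apply (@ex_derive_continuous R_AbsRing R_NormedModule). auto_derive. split. lra.
    split; auto. pose proof (sqrt_lt_R0 (1 + - t) ltac:(lra)). lra. }
  rewrite <- (is_RInt_unique _ _ _ _ (hp_int z s Hz Hs0)).
  pose proof (sqrt_lt_R0 (1 - s) ltac:(lra)) as Hss.
  split.
  - apply RInt_le; auto. lra. intros t Ht. unfold k.
    pose proof (hp_ge0 z t).
    assert (sqrt (1 - t) <= 1) by (apply Rle_trans with (sqrt 1); [apply sqrt_le_1_alt; lra | rewrite sqrt_1; lra]).
    pose proof (sqrt_lt_R0 (1 - t) ltac:(lra)).
    assert (1 <= / sqrt (1 - t)) by (apply Rle_trans with (/ 1); [rewrite Rinv_1; lra | apply Rinv_le_contravar; lra]).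
    nra.
  - set (c := / sqrt (1 - s)).
    assert (Hsc := is_RInt_scal (V := R_NormedModule) (hp z) 0 s c _ (hp_int z s Hz Hs0)).
    change (is_RInt (fun t => c * hp z t) 0 s (c * (Rpower s z / z))) in Hsc.
    rewrite (is_RInt_unique _ _ _ _ (hp_int z s Hz Hs0)).
    rewrite <- (is_RInt_unique _ _ _ _ Hsc).
    apply RInt_le; auto. lra. eexists; eauto. intros t Ht. unfold k, c.
    pose proof (hp_ge0 z t).
    assert (sqrt (1 - s) <= sqrt (1 - t)) by (apply sqrt_le_1_alt; lra).
    assert (/ sqrt (1 - t) <= / sqrt (1 - s)) by (apply Rinv_le_contravar; lra).
    nra.
Qed.

Theorem mainTheorem14 (q z : R) :
  0 < q -> q < 1 / 2 -> 1 < z ->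
  let p := 1 - q in
  let s := 4 * p * q in
  sqrt (z / (z + 1 / 2)) * (Rpower s z / sqrt (PI * z))
    <= inc_beta s z (1 / 2) /\
  inc_beta s z (1 / 2)
    <= 1 / sqrt (1 - s) * (Rpower s z / sqrt (PI * z)).
Proof.
  intros Hq0 Hq1 Hz p s.
  assert (Hs : 0 < s < 1) by (unfold s, p; split; nra).
  destruct (J_bounds z s Hz Hs) as [JL JU].
  unfold inc_beta. rewrite Gamma_half.
  set (J := RInt (fun t => Rpower t (z - 1) * Rpower (1 - t) (1 / 2 - 1)) 0 s) in *.
  set (P := Rpower s z) in *.
  assert (HP : 0 < P) by (unfold P, Rpower; apply exp_pos).
  pose proof PI_RGT_0.
  set (Q := sqrt PI). assert (HQ : 0 < Q) by (apply sqrt_lt_R0; lra).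
  set (S := sqrt z). assert (HS : 0 < S) by (apply sqrt_lt_R0; lra).
  assert (HS2 : S * S = z) by (apply sqrt_sqrt; lra).
  set (Hh := sqrt (z + 1 / 2)). assert (HH : 0 < Hh) by (apply sqrt_lt_R0; lra).
  assert (HH2 : Hh * Hh = z + 1 / 2) by (apply sqrt_sqrt; lra).
  assert (E1 : sqrt (PI * z) = Q * S) by (apply sqrt_mult; lra).
  assert (E2 : sqrt (z / (z + 1 / 2)) = S / Hh) by (apply sqrt_div; lra).
  rewrite E1, E2.
  destruct (Gamma_IG z ltac:(lra)) as [_ Hg].
  destruct (Gamma_IG (z + 1 / 2) ltac:(lra)) as [_ Hg'].
  pose proof (Gautschi_up z ltac:(lra)) as Up. fold S in Up.
  pose proof (Gautschi_low z ltac:(lra)) as Lo. fold Hh in Lo. rewrite Gamma_rec in Lo by lra.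
  set (g := Gamma z) in *. set (g' := Gamma (z + 1 / 2)) in *.
  set (c := g' / (g * Q)).
  assert (Hc : 0 < c) by (unfold c; apply Rdiv_lt_0_compat; [lra | apply Rmult_lt_0_compat; lra]).
  set (r := sqrt (1 - s)) in *. assert (Hr : 0 < r) by (apply sqrt_lt_R0; lra).
  split.
  -
    apply Rle_trans with (c * (P / z)).
    + assert (K1 : 1 / Hh <= g' / (g * z)).
      { apply (Rmult_le_reg_r (Hh * (g * z))). apply Rmult_lt_0_compat; [lra| apply Rmult_lt_0_compat; lra].
        replace (1 / Hh * (Hh * (g * z))) with (z * g) by (field; lra).
        replace (g' / (g * z) * (Hh * (g * z))) with (Hh * g') by (field; lra). auto. }
      replace (S / Hh * (P / (Q * S))) with ((1 / Hh) * (P / Q)) by (field; lra).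
      replace (c * (P / z)) with ((g' / (g * z)) * (P / Q)) by (unfold c; field; lra).
      apply Rmult_le_compat_r. left; apply Rdiv_lt_0_compat; lra. auto.
    + apply Rmult_le_compat_l; lra.
  -
    apply Rle_trans with (c * (/ r * (P / z))).
    + apply Rmult_le_compat_l; lra.
    + assert (K2 : g' / (g * z) <= 1 / S).
      { apply (Rmult_le_reg_r (S * (g * z))). apply Rmult_lt_0_compat; [lra| apply Rmult_lt_0_compat; lra].
        replace (1 / S * (S * (g * z))) with (g * z) by (field; lra).
        replace (g' / (g * z) * (S * (g * z))) with (S * g') by (field; lra).
        rewrite <- HS2. nra. }
      replace (c * (/ r * (P / z))) with ((g' / (g * z)) * (P / (Q * r))) by (unfold c; field; lra).
      replace (1 / r * (P / (Q * S))) with ((1 / S) * (P / (Q * r))) by (field; lra).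
      apply Rmult_le_compat_r. left; apply Rdiv_lt_0_compat; [lra | apply Rmult_lt_0_compat; lra]. auto.
Qed.
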